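(* Let $(A,m,i)$ be a monoid in $\mathcal V$, let $(M,\mu,\nu)$ be an $A$-bimodule, and let $d\colon A\to M$ be a morphism in $\mathcal V$ satisfying the Leibniz rule $d\circ m = d\cdot 1_A + 1_A\cdot d$ (as morphisms $A\otimes A\to M$). Then the following are equivalent: (i) $1_A\cdot d=\mu\circ(1_A\otimes d)\colon A\otimes A\to M$ is an epimorphism in $\mathcal V$; (ii) $d\cdot 1_A=\nu\circ(d\otimes 1_A)\colon A\otimes A\to M$ is an epimorphism in $\mathcal V$; (iii) $1_A\cdot d\cdot 1_A\colon A\otimes A\otimes A\to M$ is an epimorphism in $\mathcal V$.
   Context: $\mathcal V$ is a monoidal additive category: a monoidal category which is $\mathbf{Ab}$-enriched with finite biproducts, whose tensor product is additive in each variable, and which has finite limits and colimits. A monoid $(A,m,i)$ in $\mathcal V$ has multiplication $m\colon A\otimes A\to A$ and unit $i\colon I\to A$. An $A$-bimodule $(M,\mu,\nu)$ has left action $\mu\colon A\otimes M\to M$ and right action $\nu\colon M\otimes A\to M$, each satisfying associativity and unit axioms, and compatible with each other. Notation: for morphisms $f\colon X\to M$ and $g\colon Y\to A$, $g\cdot f:=\mu\circ(g\otimes f)\colon Y\otimes X\to M$ and $f\cdot g:=\nu\circ(f\otimes g)$; $1_A\cdot d\cdot 1_A$ denotes the morphism $A\otimes A\otimes A\to M$ obtained by applying $d$ to the middle factor and then both actions (associators suppressed). *)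

(* Defs.v *)
From HB Require Import structures.
From mathcomp Require Import all_boot ssralg.
Set Implicit Arguments. Unset Strict Implicit. Unset Printing Implicit Defensive.
Import GRing.Theory.
Local Open Scope ring_scope.

(* A monoidal additive category: Ab-enriched (hom-sets are abelian groups,
   composition bilinear), with a zero object and binary biproducts (hence all
   finite biproducts), kernels and cokernels (hence, with biproducts, all finite
   limits and colimits), and a monoidal structure whose tensor product is
   additive in each variable. *)
Record MonAddCat := {
  Ob :> Type;
  Mor : Ob -> Ob -> zmodType;
  idm : forall X, Mor X X;
  cmp : forall X Y Z, Mor Y Z -> Mor X Y -> Mor X Z; (* cmp g f = g o f *)
  comp_assoc : forall X Y Z W (f : Mor X Y) (g : Mor Y Z) (h : Mor Z W),
      cmp h (cmp g f) = cmp (cmp h g) f;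
  comp_id_l : forall X Y (f : Mor X Y), cmp (idm Y) f = f;
  comp_id_r : forall X Y (f : Mor X Y), cmp f (idm X) = f;
  comp_addl : forall X Y Z (g g' : Mor Y Z) (f : Mor X Y),
      cmp (g + g') f = cmp g f + cmp g' f;
  comp_addr : forall X Y Z (g : Mor Y Z) (f f' : Mor X Y),
      cmp g (f + f') = cmp g f + cmp g f';
  zobj : Ob;
  zobj_zero : idm zobj = 0;
  bip : Ob -> Ob -> Ob;
  bip_i1 : forall X Y, Mor X (bip X Y);
  bip_i2 : forall X Y, Mor Y (bip X Y);
  bip_p1 : forall X Y, Mor (bip X Y) X;
  bip_p2 : forall X Y, Mor (bip X Y) Y;
  bip_p1i1 : forall X Y, cmp (bip_p1 X Y) (bip_i1 X Y) = idm X;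
  bip_p2i2 : forall X Y, cmp (bip_p2 X Y) (bip_i2 X Y) = idm Y;
  bip_p1i2 : forall X Y, cmp (bip_p1 X Y) (bip_i2 X Y) = 0;
  bip_p2i1 : forall X Y, cmp (bip_p2 X Y) (bip_i1 X Y) = 0;
  bip_sum : forall X Y, cmp (bip_i1 X Y) (bip_p1 X Y)
                        + cmp (bip_i2 X Y) (bip_p2 X Y) = idm (bip X Y);
  has_kernels : forall X Y (f : Mor X Y), exists K (k : Mor K X),
      cmp f k = 0 /\
      forall W (g : Mor W X), cmp f g = 0 ->
        exists h : Mor W K, cmp k h = g /\
          forall h' : Mor W K, cmp k h' = g -> h' = h;
  has_cokernels : forall X Y (f : Mor X Y), exists Q (q : Mor Y Q),
      cmp q f = 0 /\
      forall W (g : Mor Y W), cmp g f = 0 ->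
        exists h : Mor Q W, cmp h q = g /\
          forall h' : Mor Q W, cmp h' q = g -> h' = h;
  tens : Ob -> Ob -> Ob;
  tensM : forall X X' Y Y', Mor X X' -> Mor Y Y' -> Mor (tens X Y) (tens X' Y');
  tens_id : forall X Y, tensM (idm X) (idm Y) = idm (tens X Y);
  tens_comp : forall X X' X'' Y Y' Y'' (f : Mor X X') (f' : Mor X' X'')
      (g : Mor Y Y') (g' : Mor Y' Y''),
      tensM (cmp f' f) (cmp g' g) = cmp (tensM f' g') (tensM f g);
  tens_addl : forall X X' Y Y' (f f' : Mor X X') (g : Mor Y Y'),
      tensM (f + f') g = tensM f g + tensM f' g;
  tens_addr : forall X X' Y Y' (f : Mor X X') (g g' : Mor Y Y'),
      tensM f (g + g') = tensM f g + tensM f g';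
  unitI : Ob;
  assoc : forall X Y Z, Mor (tens (tens X Y) Z) (tens X (tens Y Z));
  assoc_inv : forall X Y Z, Mor (tens X (tens Y Z)) (tens (tens X Y) Z);
  assoc_iso1 : forall X Y Z, cmp (assoc_inv X Y Z) (assoc X Y Z) = idm _;
  assoc_iso2 : forall X Y Z, cmp (assoc X Y Z) (assoc_inv X Y Z) = idm _;
  assoc_nat : forall X X' Y Y' Z Z' (f : Mor X X') (g : Mor Y Y') (h : Mor Z Z'),
      cmp (assoc X' Y' Z') (tensM (tensM f g) h)
      = cmp (tensM f (tensM g h)) (assoc X Y Z);
  lunit : forall X, Mor (tens unitI X) X;
  lunit_inv : forall X, Mor X (tens unitI X);
  lunit_iso1 : forall X, cmp (lunit_inv X) (lunit X) = idm _;
  lunit_iso2 : forall X, cmp (lunit X) (lunit_inv X) = idm _;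
  lunit_nat : forall X X' (f : Mor X X'),
      cmp (lunit X') (tensM (idm unitI) f) = cmp f (lunit X);
  runit : forall X, Mor (tens X unitI) X;
  runit_inv : forall X, Mor X (tens X unitI);
  runit_iso1 : forall X, cmp (runit_inv X) (runit X) = idm _;
  runit_iso2 : forall X, cmp (runit X) (runit_inv X) = idm _;
  runit_nat : forall X X' (f : Mor X X'),
      cmp (runit X') (tensM f (idm unitI)) = cmp f (runit X);
  pentagon : forall X Y Z W,
      cmp (assoc X Y (tens Z W)) (assoc (tens X Y) Z W)
      = cmp (tensM (idm X) (assoc Y Z W))
          (cmp (assoc X (tens Y Z) W) (tensM (assoc X Y Z) (idm W)));
  triangle : forall X Y,
      cmp (tensM (idm X) (lunit Y)) (assoc X unitI Y) = tensM (runit X) (idm Y)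
}.

Arguments idm {_} _.
Arguments cmp {_ _ _ _}.
Arguments tensM {_ _ _ _ _}.
Arguments assoc {_} _ _ _.
Arguments lunit {_} _.
Arguments runit {_} _.
Arguments unitI {_}.
Arguments tens {_}.

Section Defs.
Variable C : MonAddCat.

Definition is_epi (X Y : C) (f : Mor X Y) : Prop :=
  forall (Z : C) (g h : Mor Y Z), cmp g f = cmp h f -> g = h.

Definition is_monoid (A : C) (m : Mor (tens A A) A) (i : Mor unitI A) : Prop :=
  [/\ cmp m (tensM m (idm A)) = cmp m (cmp (tensM (idm A) m) (assoc A A A)),
      cmp m (tensM i (idm A)) = lunit A
    & cmp m (tensM (idm A) i) = runit A].

Definition is_bimodule (A : C) (m : Mor (tens A A) A) (i : Mor unitI A)
    (M : C) (mu : Mor (tens A M) M) (nu : Mor (tens M A) M) : Prop :=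
  [/\ cmp mu (tensM m (idm M)) = cmp mu (cmp (tensM (idm A) mu) (assoc A A M)),
      cmp mu (tensM i (idm M)) = lunit M,
      cmp nu (tensM nu (idm A)) = cmp nu (cmp (tensM (idm M) m) (assoc M A A)),
      cmp nu (tensM (idm M) i) = runit M
    & cmp nu (tensM mu (idm A)) = cmp mu (cmp (tensM (idm A) nu) (assoc A M A))].

End Defs.

(* Main.v *)
Require Import Defs.
From mathcomp Require Import all_boot ssralg.
Local Open Scope ring_scope.
Import GRing.Theory.

Section Aux.
Variable C : MonAddCat.

Lemma tfg (X X' Y Y' : C) (f : Mor X X') (g : Mor Y Y') :
  cmp (tensM f (idm Y')) (tensM (idm X) g) = tensM f g.
Proof. by rewrite -tens_comp comp_id_l comp_id_r. Qed.

Lemma tgf (X X' Y Y' : C) (f : Mor X X') (g : Mor Y Y') :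
  cmp (tensM (idm X') g) (tensM f (idm Y)) = tensM f g.
Proof. by rewrite -tens_comp comp_id_l comp_id_r. Qed.

Lemma t1c (X Y Y' Y'' : C) (g : Mor Y Y') (g' : Mor Y' Y'') :
  cmp (tensM (idm X) g') (tensM (idm X) g) = tensM (idm X) (cmp g' g).
Proof. by rewrite -tens_comp comp_id_l. Qed.

Lemma tc1 (X X' X'' Y : C) (f : Mor X X') (f' : Mor X' X'') :
  cmp (tensM f' (idm Y)) (tensM f (idm Y)) = tensM (cmp f' f) (idm Y).
Proof. by rewrite -tens_comp comp_id_l. Qed.

Lemma epi_sec (X Y Z : C) (T : Mor Y Z) (s : Mor X Y) :
  is_epi (cmp T s) -> is_epi T.
Proof. move=> H W g h e; apply: H; by rewrite !comp_assoc e. Qed.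

Lemma epi_via (X Y Z : C) (T : Mor X Z) (L : Mor Y Z) (a b : Mor X Y) :
  T + cmp L a = cmp L b -> is_epi T -> is_epi L.
Proof.
move=> e HT W g h gh; apply: HT.
have eg := congr1 (cmp g) e; have eh := congr1 (cmp h) e.
rewrite comp_addr !comp_assoc gh in eg.
rewrite comp_addr !comp_assoc in eh.
rewrite -eh in eg; exact: addIr eg.
Qed.
End Aux.

Theorem proposition3p5 (C : MonAddCat) (A : C) (m : Mor (tens A A) A)
    (i : Mor unitI A) (M : C) (mu : Mor (tens A M) M) (nu : Mor (tens M A) M)
    (d : Mor A M)
    (hA : is_monoid m i) (hM : is_bimodule m i mu nu)
    (leibniz : cmp d m = cmp nu (tensM d (idm A)) + cmp mu (tensM (idm A) d)) :
  [/\ (is_epi (cmp mu (tensM (idm A) d)) <-> is_epi (cmp nu (tensM d (idm A)))),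
      (is_epi (cmp nu (tensM d (idm A)))
        <-> is_epi (cmp nu (tensM (cmp mu (tensM (idm A) d)) (idm A))))
    & (is_epi (cmp nu (tensM (cmp mu (tensM (idm A) d)) (idm A)))
        <-> is_epi (cmp mu (tensM (idm A) d)))].
Proof.
case: hM => mu_as mu_u nu_as nu_u munu.
set L := cmp mu (tensM (idm A) d).
set R := cmp nu (tensM d (idm A)).
set T := cmp nu (tensM L (idm A)).
have TsL : cmp T (cmp (tensM (idm (tens A A)) i) (runit_inv (tens A A))) = L.
  rewrite /T -!comp_assoc (comp_assoc (runit_inv _)).
  rewrite tfg -tgf -comp_assoc comp_assoc nu_u comp_assoc runit_nat -comp_assoc.
  by rewrite runit_iso2 comp_id_r.
have TR : T = cmp mu (cmp (tensM (idm A) R) (assoc A A A)).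
  rewrite /T /L -(comp_id_l (idm A)) tens_comp comp_id_l comp_assoc munu.
  rewrite -!comp_assoc; congr (cmp mu _).
  by rewrite assoc_nat comp_assoc t1c.
have TsR : cmp T (cmp (assoc_inv A A A) (cmp (tensM i (idm (tens A A)))
              (lunit_inv (tens A A)))) = R.
  rewrite TR -!comp_assoc (comp_assoc _ (assoc_inv _ _ _)) assoc_iso2 comp_id_l.
  rewrite (comp_assoc (lunit_inv _)) tgf -tfg -comp_assoc comp_assoc mu_u comp_assoc lunit_nat -comp_assoc.
  by rewrite lunit_iso2 comp_id_r.
have eqR : T + cmp R (cmp (tensM (idm A) m) (assoc A A A)) = cmp R (tensM m (idm A)).
  have h1 : cmp nu (tensM R (idm A)) = cmp nu (cmp (tensM d m) (assoc A A A)).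
    rewrite /R -tc1 comp_assoc nu_as -!comp_assoc assoc_nat tens_id.
    by rewrite (comp_assoc (assoc _ _ _)) tgf.
  have h2 : cmp R (cmp (tensM (idm A) m) (assoc A A A)) = cmp nu (cmp (tensM d m) (assoc A A A)).
    by rewrite /R -!comp_assoc (comp_assoc (assoc _ _ _)) tfg.
  have h3 : cmp R (tensM m (idm A)) = cmp nu (tensM R (idm A)) + T.
    by rewrite {1}/R -comp_assoc tc1 leibniz tens_addl comp_addr.
  by rewrite h3 h1 -h2 addrC.
have eqL : T + cmp L (tensM m (idm A)) = cmp L (cmp (tensM (idm A) m) (assoc A A A)).
  have k1 : cmp L (cmp (tensM (idm A) m) (assoc A A A))
        = T + cmp mu (cmp (tensM (idm A) L) (assoc A A A)).
    rewrite {1}/L -!comp_assoc (comp_assoc (assoc _ _ _)) t1c leibniz tens_addr.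
    by rewrite comp_addl comp_addr TR.
  have k2 : cmp mu (cmp (tensM (idm A) L) (assoc A A A)) = cmp mu (tensM m d).
    rewrite /L -t1c -comp_assoc -assoc_nat !(comp_assoc (tensM (tensM _ _) d)) -mu_as tens_id.
    by rewrite -comp_assoc tfg.
  have k3 : cmp L (tensM m (idm A)) = cmp mu (tensM m d).
    by rewrite /L -comp_assoc tgf.
  by rewrite k1 k2 k3.
have i3 : is_epi L <-> is_epi T.
  split; last exact: epi_via eqL.
  by move=> HL; apply: (@epi_sec _ _ _ _ _ (cmp (tensM (idm (tens A A)) i) (runit_inv (tens A A)))); rewrite TsL.
have ii3 : is_epi R <-> is_epi T.
  split; last exact: epi_via eqR.
  by move=> HR; apply: (@epi_sec _ _ _ _ _ (cmp (assoc_inv A A A) (cmp (tensM i (idm (tens A A))) (lunit_inv (tens A A))))); rewrite TsR.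
case: i3 => i3a i3b; case: ii3 => r3a r3b.
by split; split; auto.
Qed.
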